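(* Let $A$ and $B$ be Banach algebras and $\phi$ a nonzero character on $A$. For $D_1\in\mathcal Z^1(A,A^* )$ and $D_4\in\mathcal Z^1_c(B,B^* )$, the map $D(a,b)=(D_1(a),D_4(b))$ is a bounded derivation $A\oplus_\phi B\to(A\oplus_\phi B)^*\cong A^*\oplus_\infty B^*$, it is inner if and only if $D_1$ and $D_4$ are inner, and the assignment $(D_1,D_4)\mapsto D$ induces an injective linear map $$\mathcal H^1(A,A^* )\oplus\mathcal H^1_c(B,B^* )\longrightarrow\mathcal H^1(A\oplus_\phi B,(A\oplus_\phi B)^* ).$$
   Context: For Banach algebras $A,B$ and a nonzero character $\phi$ on $A$, the $\phi$-Lau product $A\oplus_\phi B$ is the Banach space $\{(a,b):a\in A,b\in B\}$ with norm $\|a\|+\|b\|$ and product $(a,b)(a',b')=(aa',\ \phi(a)b'+\phi(a')b+bb')$. Its dual is identified with $A^*\oplus_\infty B^*$ via $\langle(a,b),(f,g)\rangle=f(a)+g(b)$. For a Banach algebra $C$, $C^*$ is a $C$-bimodule via $\langle c\cdot f,x\rangle=f(xc)$, $\langle f\cdot c,x\rangle=f(cx)$; $\mathcal Z^1(C,C^* )$ is the space of bounded derivations $D:C\to C^*$ ($D(xy)=x\cdot D(y)+D(x)\cdot y$), $\mathcal B^1(C,C^* )$ the inner derivations $c\mapsto c\cdot f-f\cdot c$, $\mathcal H^1(C,C^* )=\mathcal Z^1/\mathcal B^1$. A derivation $D:C\to C^*$ is cyclic if $\langle x,D(y)\rangle+\langle y,D(x)\rangle=0$ for all $x,y\in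 C$; $\mathcal Z^1_c(C,C^* )$ is the space of cyclic derivations (it contains $\mathcal B^1(C,C^* )$) and $\mathcal H^1_c(C,C^* )=\mathcal Z^1_c(C,C^* )/\mathcal B^1(C,C^* )$. *)

(* Defs.v *)
(* Scalars: an arbitrary R : numFieldType (covers C-like and
   R-like scalar fields); Banach algebras are spelled out explicitly. *)
From HB Require Import structures.
From mathcomp Require Import all_boot all_order all_algebra.
Set Implicit Arguments. Unset Strict Implicit. Unset Printing Implicit Defensive.
Import Order.TTheory GRing.Theory Num.Theory.
Local Open Scope ring_scope.

Section Defs.
Variable R : numFieldType.

Definition complete_norm (V : lmodType R) (nrm : V -> R) : Prop :=
  forall u : nat -> V,
    (forall eps : R, 0 < eps -> exists N : nat, forall m n : nat,
        (N <= m)%N -> (N <= n)%N -> nrm (u m - u n) < eps) ->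
    exists l : V, forall eps : R, 0 < eps -> exists N : nat, forall n : nat,
        (N <= n)%N -> nrm (u n - l) < eps.

Definition banach_algebra (V : lmodType R) (mul : V -> V -> V) (nrm : V -> R)
  : Prop :=
  [/\ (forall x y z, mul x (mul y z) = mul (mul x y) z),
      (forall k x y z, mul (k *: x + y) z = k *: mul x z + mul y z) /\
      (forall k x y z, mul z (k *: x + y) = k *: mul z x + mul z y),
      (forall x, 0 <= nrm x) /\ (forall x, nrm x = 0 -> x = 0) /\
      (forall x y, nrm (x + y) <= nrm x + nrm y),
      (forall k x, nrm (k *: x) = `|k| * nrm x) /\
      (forall x y, nrm (mul x y) <= nrm x * nrm y) &
      complete_norm nrm].

Definition character (V : lmodType R) (mul : V -> V -> V) (phi : V -> R) : Prop :=
  [/\ (forall k x y, phi (k *: x + y) = k * phi x + phi y),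
      (forall x y, phi (mul x y) = phi x * phi y) &
      exists x, phi x != 0].

Definition dual_elem (V : lmodType R) (nrm : V -> R) (f : V -> R) : Prop :=
  (forall k x y, f (k *: x + y) = k * f x + f y) /\
  exists M : R, forall x, `|f x| <= M * nrm x.

(* D : V -> V^*, encoded as D a x = <x, D(a)>.
   Bounded derivation: linear, bounded, D(ab) = a.D(b) + D(a).b, where
   <x, a.f> = f(xa) and <x, f.b> = f(bx). *)
Definition derivation (V : lmodType R) (mul : V -> V -> V) (nrm : V -> R)
  (D : V -> V -> R) : Prop :=
  [/\ (forall a, dual_elem nrm (D a)),
      (forall k a b x, D (k *: a + b) x = k * D a x + D b x),
      (exists M : R, forall a x, `|D a x| <= M * nrm a * nrm x) &
      (forall a b x, D (mul a b) x = D b (mul x a) + D a (mul b x))].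

Definition inner_der (V : lmodType R) (mul : V -> V -> V) (nrm : V -> R)
  (D : V -> V -> R) : Prop :=
  exists f : V -> R, dual_elem nrm f /\
    forall a x, D a x = f (mul x a) - f (mul a x).

Definition cyclic_der (V : lmodType R) (mul : V -> V -> V) (nrm : V -> R)
  (D : V -> V -> R) : Prop :=
  derivation mul nrm D /\ forall x y, D x y + D y x = 0.

Definition lau_mul (A B : lmodType R) (phi : A -> R) (mulA : A -> A -> A)
  (mulB : B -> B -> B) (p q : A * B) : A * B :=
  (mulA p.1 q.1, phi p.1 *: q.2 + phi q.1 *: p.2 + mulB p.2 q.2).

Definition lau_norm (A B : lmodType R) (nA : A -> R) (nB : B -> R) (p : A * B) : R :=
  nA p.1 + nB p.2.

(* D(a,b) = (D1 a, D4 b) in A^* (+)_oo B^*, identified with (A (+)_phi B)^*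
   via <(a,b),(f,g)> = f(a) + g(b). *)
Definition lau_der (A B : lmodType R) (D1 : A -> A -> R) (D4 : B -> B -> R)
  (p q : A * B) : R := D1 p.1 q.1 + D4 p.2 q.2.

Definition der_comb (V : lmodType R) (k : R) (D D' : V -> V -> R) : V -> V -> R :=
  fun a x => k * D a x + D' a x.
Definition der_sub (V : lmodType R) (D D' : V -> V -> R) : V -> V -> R :=
  fun a x => D a x - D' a x.

End Defs.

(* Main.v *)
Require Import Defs.
From HB Require Import structures.
From mathcomp Require Import all_boot all_order all_algebra.
From mathcomp Require Import ring.
From Stdlib Require Import FunctionalExtensionality.
Import Order.TTheory GRing.Theory Num.Theory.
Local Open Scope ring_scope.

Section Helpers.
Set Implicit Arguments. Unset Strict Implicit.
Variable R : numFieldType.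

Lemma add0_self (W : zmodType) (m : W) : m = m + m -> m = 0.
Proof. move=> h; apply: (@addrI _ m); by rewrite addr0 -h. Qed.

Lemma lin0 (V : lmodType R) (f : V -> R) :
  (forall k x y, f (k *: x + y) = k * f x + f y) -> f 0 = 0.
Proof.
move=> h; apply: add0_self; have := h 1 0 0; by rewrite scaler0 add0r mul1r.
Qed.

Lemma mul0l_ba (V : lmodType R) (mul : V -> V -> V) (nrm : V -> R) :
  banach_algebra mul nrm -> forall z, mul 0 z = 0.
Proof.
case=> _ [hl _] _ _ _ z; apply: add0_self; have := hl 1 0 0 z.
by rewrite scaler0 add0r scale1r.
Qed.

Lemma nrm0_ba (V : lmodType R) (mul : V -> V -> V) (nrm : V -> R) :
  banach_algebra mul nrm -> nrm 0 = 0.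
Proof.
case=> _ _ _ [hn _] _; have := hn 0 0; by rewrite scale0r normr0 mul0r.
Qed.

Lemma der0 (V : lmodType R) (D : V -> V -> R) :
  (forall k a b x, D (k *: a + b) x = k * D a x + D b x) -> forall x, D 0 x = 0.
Proof.
move=> h x; apply: add0_self; have := h 1 0 0 x; by rewrite scaler0 add0r mul1r.
Qed.

Lemma bnd_eq (c M n : R) : `|c| <= M * n -> 0 <= n -> M * n = `|M| * n.
Proof.
move=> hc hn; have h0 : 0 <= M * n by apply: le_trans hc.
by rewrite -(ger0_norm h0) normrM (ger0_norm hn).
Qed.

Lemma sum_bnd (c d P Q a b : R) : 0 <= a -> 0 <= b ->
  `|c| <= P * a -> `|d| <= Q * b -> `|c + d| <= (`|P| + `|Q|) * (a + b).
Proof.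
move=> ha hb hc hd.
have e1 := bnd_eq hc ha; have e2 := bnd_eq hd hb.
rewrite e1 in hc; rewrite e2 in hd.
apply: le_trans (ler_normD _ _) _; rewrite mulrDr.
apply: lerD.
  apply: le_trans hc _; apply: ler_wpM2r => //; rewrite lerDl //.
apply: le_trans hd _; apply: ler_wpM2r => //; rewrite lerDr //.
Qed.

Lemma sum_bnd2 (c d P Q a x b y : R) : 0 <= a -> 0 <= b -> 0 <= x -> 0 <= y ->
  `|c| <= P * a * x -> `|d| <= Q * b * y ->
  `|c + d| <= (`|P| + `|Q|) * (a + b) * (x + y).
Proof.
move=> ha hb hx hy; rewrite -!mulrA => hc hd.
have hax : 0 <= a * x by apply: mulr_ge0.
have hby : 0 <= b * y by apply: mulr_ge0.
apply: le_trans (sum_bnd hax hby hc hd) _.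
set M := `|P| + `|Q|.
have hM : 0 <= M by apply: addr_ge0.
have -> : M * ((a + b) * (x + y)) = M * (a * x + b * y) + M * (a * y + b * x) by ring.
rewrite lerDl; apply: mulr_ge0 => //; apply: addr_ge0; exact: mulr_ge0.
Qed.

End Helpers.

Section Main.
Set Implicit Arguments. Unset Strict Implicit.
Variables (R : numFieldType) (A B : lmodType R)
  (mulA : A -> A -> A) (nA : A -> R) (mulB : B -> B -> B) (nB : B -> R)
  (hA : banach_algebra mulA nA) (hB : banach_algebra mulB nB)
  (phi : A -> R) (hphi : character mulA phi).

Lemma inner_ext (V : lmodType R) (mul : V -> V -> V) (nrm : V -> R) (D D' : V -> V -> R) :
  (forall a x, D a x = D' a x) -> inner_der mul nrm D -> inner_der mul nrm D'.
Proof. move=> e [f [hf hD]]; exists f; split => // a x; by rewrite -e. Qed.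

Lemma inner_lau (D1 : A -> A -> R) (D4 : B -> B -> R) :
  D1 0 0 = 0 -> D4 0 0 = 0 ->
  (inner_der (lau_mul phi mulA mulB) (lau_norm nA nB) (lau_der D1 D4) <->
      inner_der mulA nA D1 /\ inner_der mulB nB D4).
Proof.
move=> h1 h4.
case: hphi => phil _ _.
have phi0 := lin0 phil.
have mA0 := mul0l_ba hA; have mB0 := mul0l_ba hB.
have nA0 := nrm0_ba hA; have nB0 := nrm0_ba hB.
split.
- case=> F [[Fl [M FM]] FD]; split.
  + exists (fun x => F (x, 0)); split.
      split; first by move=> k x y; rewrite -Fl; congr F; apply/eqP; rewrite xpair_eqE /= scaler0 addr0 !eqxx.
      exists M => x; have := FM (x, 0); by rewrite /lau_norm /= nB0 addr0.
    move=> a x; have := FD (a, 0) (x, 0).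
    rewrite /lau_der /lau_mul /= h4 addr0 => ->.
    by rewrite !scaler0 !mB0 !addr0.
  + exists (fun x => F (0, x)); split.
      split; first by move=> k x y; rewrite -Fl; congr F; apply/eqP; rewrite xpair_eqE /= scaler0 addr0 !eqxx.
      exists M => x; have := FM (0, x); by rewrite /lau_norm /= nA0 add0r.
    move=> a x; have := FD (0, a) (0, x).
    rewrite /lau_der /lau_mul /= h1 add0r => ->.
    by rewrite !mA0 phi0 !scale0r !add0r.
- case=> [[f [[fl [Mf fM]] fD]] [g [[gl [Mg gM]] gD]]].
  exists (fun p => f p.1 + g p.2); split.
    split.
      move=> k [x1 x2] [y1 y2] /=; rewrite fl gl; ring.
    exists (`|Mf| + `|Mg|) => [[x1 x2]]; rewrite /lau_norm /=.
    apply: sum_bnd; [by case: hA => _ _ [] | by case: hB => _ _ [] | exact: fM | exact: gM].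
  move=> [a b] [x1 x2]; rewrite /lau_der /lau_mul /= fD gD.
  have gadd : forall u v, g (u + v) = g u + g v.
    by move=> u v; rewrite -(scale1r u) gl mul1r scale1r.
  rewrite !gadd; ring.
Qed.

Lemma der_lau (D1 : A -> A -> R) (D4 : B -> B -> R) :
  derivation mulA nA D1 -> cyclic_der mulB nB D4 ->
  derivation (lau_mul phi mulA mulB) (lau_norm nA nB) (lau_der D1 D4).
Proof.
case=> d1 l1 [M1 b1] dd1 [[d4 l4 [M4 b4] dd4] cyc].
case: hA => _ _ [nAp _] _ _; case: hB => _ _ [nBp _] _ _.
split.
- move=> [a b]; split.
    move=> k [x1 x2] [y1 y2]; rewrite /lau_der /=.
    case: (d1 a) => -> _; case: (d4 b) => -> _; ring.
  case: (d1 a) => _ [Ma hMa]; case: (d4 b) => _ [Mb hMb].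
  exists (`|Ma| + `|Mb|) => [[x1 x2]]; rewrite /lau_norm /lau_der /=.
  by apply: sum_bnd.
- move=> k [a b] [a' b'] [x1 x2]; rewrite /lau_der /= l1 l4; ring.
- exists (`|M1| + `|M4|) => [[a b] [x1 x2]]; rewrite /lau_norm /lau_der /=.
  by apply: sum_bnd2.
- move=> [a b] [a' b'] [x1 x2]; rewrite /lau_der /lau_mul /=.
  have L4 : forall c u v, D4 c (u + v) = D4 c u + D4 c v.
    by move=> c u v; case: (d4 c) => h _; rewrite -(scale1r u) h mul1r scale1r.
  have Z4 : forall c k u, D4 c (k *: u) = k * D4 c u.
    by move=> c k u; case: (d4 c) => h _; rewrite -(addr0 (k *: u)) h lin0 // addr0.
  have A4 : forall u v x, D4 (u + v) x = D4 u x + D4 v x.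
    by move=> u v x; rewrite -(scale1r u) l4 mul1r scale1r.
  have S4 : forall k u x, D4 (k *: u) x = k * D4 u x.
    by move=> k u x; rewrite -(addr0 (k *: u)) l4 der0 // addr0.
  rewrite dd1 !A4 !S4 dd4 !L4 !Z4.
  have := cyc b b' => /eqP; rewrite addr_eq0 => /eqP ->.
  ring.
Qed.

End Main.

Theorem theorem6p15 (R : numFieldType) (A B : lmodType R)
  (mulA : A -> A -> A) (nA : A -> R) (mulB : B -> B -> B) (nB : B -> R)
  (hA : banach_algebra mulA nA) (hB : banach_algebra mulB nB)
  (phi : A -> R) (hphi : character mulA phi) :
  (* D is a bounded derivation, inner iff D1 and D4 are inner *)
  (forall (D1 : A -> A -> R) (D4 : B -> B -> R),
     derivation mulA nA D1 -> cyclic_der mulB nB D4 ->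
     derivation (lau_mul phi mulA mulB) (lau_norm nA nB) (lau_der D1 D4) /\
     (inner_der (lau_mul phi mulA mulB) (lau_norm nA nB) (lau_der D1 D4) <->
      inner_der mulA nA D1 /\ inner_der mulB nB D4)) /\
  (* the assignment (D1, D4) |-> D is linear *)
  (forall (k : R) (D1 D1' : A -> A -> R) (D4 D4' : B -> B -> R),
     lau_der (der_comb k D1 D1') (der_comb k D4 D4')
     = der_comb k (lau_der D1 D4) (lau_der D1' D4')) /\
  (* it induces a well-defined (<-) injective (->) map
     H^1(A,A^* ) (+) H^1_c(B,B^* ) -> H^1(A (+)_phi B, (A (+)_phi B)^* ) *)
  (forall (D1 D1' : A -> A -> R) (D4 D4' : B -> B -> R),
     derivation mulA nA D1 -> derivation mulA nA D1' ->
     cyclic_der mulB nB D4 -> cyclic_der mulB nB D4' ->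
     (inner_der (lau_mul phi mulA mulB) (lau_norm nA nB)
        (der_sub (lau_der D1 D4) (lau_der D1' D4')) <->
      inner_der mulA nA (der_sub D1 D1') /\ inner_der mulB nB (der_sub D4 D4'))).
Proof.
split; [|split].
- move=> D1 D4 h1 h4; split; first exact: der_lau.
  apply: inner_lau => //.
    by case: h1 => _ l _ _; apply: der0.
  by case: h4 => [[_ l _ _] _]; apply: der0.
- move=> k D1 D1' D4 D4'; apply: functional_extensionality => p.
  apply: functional_extensionality => q.
  rewrite /lau_der /der_comb; ring.
- move=> D1 D1' D4 D4' h1 h1' h4 h4'.
  have e : forall p q, der_sub (lau_der D1 D4) (lau_der D1' D4') p q =
            lau_der (der_sub D1 D1') (der_sub D4 D4') p q.
    by move=> p q; rewrite /der_sub /lau_der; ring.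
  have z1 : der_sub D1 D1' 0 0 = 0.
    case: h1 => _ l _ _; case: h1' => _ l' _ _.
    by rewrite /der_sub !der0 // subr0.
  have z4 : der_sub D4 D4' 0 0 = 0.
    case: h4 => [[_ l _ _] _]; case: h4' => [[_ l' _ _] _].
    by rewrite /der_sub !der0 // subr0.
  split.
    move=> h; apply/(inner_lau hA hB hphi z1 z4); exact: inner_ext h.
  move=> h; apply: (inner_ext (D := lau_der (der_sub D1 D1') (der_sub D4 D4'))).
    by move=> p q; rewrite e.
  by apply/(inner_lau hA hB hphi z1 z4).
Qed.
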